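(* Let $\mathbf v=(v_1,\dots,v_m)$ and $\mathbf k=(k_1,\dots,k_m)$ be $m$-tuples of positive integers with $\mathbf v\ge\mathbf k$, and $\mathbf w=(w_1,\dots,w_n)$ and $\boldsymbol\ell=(\ell_1,\dots,\ell_n)$ be $n$-tuples of positive integers with $\mathbf w\ge\boldsymbol\ell$. Let $t$ be a positive integer with $t\le\sum_i k_i$ and $t\le\sum_i\ell_i$. Then \[ C(\mathrm{cat}(\mathbf v,\mathbf w),\mathrm{cat}(\mathbf k,\boldsymbol\ell),t)\ \le\ \max\{C(\mathbf v,\mathbf k,t),C(\mathbf w,\boldsymbol\ell,t)\}+C(\mathbf v,\mathbf k,t-1)\,C(\mathbf w,\boldsymbol\ell,t-1), \] with the convention $C(\cdot,\cdot,0)=0$.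
   Context: $\mathrm{cat}(\mathbf a,\mathbf b)$ denotes concatenation of tuples. For tuples $\mathbf a,\mathbf b$ of positive integers of the same length $p$ with $\mathbf b\le\mathbf a$ entrywise and a positive integer $s\le\sum_i b_i$: let $Y_1,\dots,Y_p$ be pairwise disjoint sets with $|Y_i|=a_i$; a block is a $p$-tuple $(B_1,\dots,B_p)$ with $B_i\subseteq Y_i$, $|B_i|=b_i$; a $p$-tuple of sets $(T_1,\dots,T_p)$ is $(\mathbf a,\mathbf b,s)$-admissible if $T_i\subseteq Y_i$, $|T_i|\le b_i$ for all $i$ and $\sum|T_i|=s$, and is contained in a block if $T_i\subseteq B_i$ for all $i$. A ${\rm GC}(\mathbf a,\mathbf b,s)$ is a finite family (repetitions allowed) of blocks containing every admissible tuple in at least one block; $C(\mathbf a,\mathbf b,s)$ is the minimum number of blocks of such a design. *)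

(* Defs.v *)
From mathcomp Require Import all_boot.
From mathcomp Require Import finmap.
From mathcomp Require Import boolp.

Set Implicit Arguments.
Unset Strict Implicit.
Unset Printing Implicit Defensive.

Local Open Scope fset_scope.

(* Tuples of positive integers are sequences of nat; the i-th entry is
   nth 0 a i (0-based, i < size a).  The pairwise disjoint ground sets
   Y_1,...,Y_p are modelled as p separate copies indexed by i, with
   Y_i = {0, ..., a_i - 1}.  A p-tuple of sets (T_1,...,T_p) is a function
   T : nat -> {fset nat}, of which only the entries i < p matter. *)

Definition is_block (a b : seq nat) (B : nat -> {fset nat}) : Prop :=
  forall i, i < size a ->
    (forall x, x \in B i -> x < nth 0 a i) /\ #|` B i| = nth 0 b i.

Definition admissible (a b : seq nat) (s : nat) (T : nat -> {fset nat}) : Prop :=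
  (forall i, i < size a ->
     (forall x, x \in T i -> x < nth 0 a i) /\ #|` T i| <= nth 0 b i)
  /\ \sum_(i < size a) #|` T i| = s.

Definition contained_in (p : nat) (T B : nat -> {fset nat}) : Prop :=
  forall i, i < p -> T i `<=` B i.

(* A GC(a,b,s): a finite family (list, repetitions allowed) of blocks
   containing every admissible tuple in at least one block. *)
Definition is_GC (a b : seq nat) (s : nat) (F : seq (nat -> {fset nat})) : Prop :=
  (forall j, j < size F -> is_block a b (nth (fun _ => fset0) F j)) /\
  (forall T, admissible a b s T ->
     exists2 j, j < size F & contained_in (size a) T (nth (fun _ => fset0) F j)).

Definition GC_size (a b : seq nat) (s : nat) : pred nat :=
  fun n => `[< exists F, size F = n /\ is_GC a b s F >].

(* C(a,b,s) = minimum number of blocks of a GC(a,b,s); convention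
   C(.,.,0) = 0.  (If no GC exists the value is 0; this never happens under
   the standing hypotheses b <= a.) *)
Definition C (a b : seq nat) (s : nat) : nat :=
  if s == 0 then 0 else
  match pselect (exists n, GC_size a b s n) with
  | left h => ex_minn h
  | right _ => 0
  end.

(* Main.v *)
Require Import Defs.
From mathcomp Require Import all_boot finmap boolp zify.
Set Implicit Arguments.
Unset Strict Implicit.
Unset Printing Implicit Defensive.

Local Open Scope fset_scope.

Lemma ex_new (S : {fset nat}) a : (forall x, x \in S -> x < a) -> #|` S| < a ->
  exists y, y < a /\ y \notin S.
Proof.
move=> HS Hc; apply/not_existsP => H.
have sub : [fset x in iota 0 a] `<=` S.
  apply/fsubsetP => x; rewrite in_fset mem_iota /= => Hx.
  apply/negPn/negP => Hn; apply: (H x); split=> //.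
have := fsubset_leq_card sub; rewrite card_fseq undup_id ?iota_uniq // size_iota.
by rewrite leqNgt Hc.
Qed.

Lemma ext_set (S : {fset nat}) a b : (forall x, x \in S -> x < a) -> #|` S| <= b -> b <= a ->
  exists S', [/\ S `<=` S', (forall x, x \in S' -> x < a) & #|` S'| = b].
Proof.
move=> HS; move Hd: (b - #|` S|) => d; elim: d S HS Hd => [|d IH] S HS Hd Hc Hb.
  exists S; split=> //; apply/eqP; rewrite eqn_leq Hc /=; by rewrite -subn_eq0 Hd.
have [y [Hy Hn]] : exists y, y < a /\ y \notin S.
  apply: ex_new => //; apply: leq_trans Hb; rewrite -subn_gt0 Hd //.
have HS' : forall x, x \in y |` S -> x < a by move=> x /fset1UP [->|/HS].
have Hd' : b - #|` y |` S| = d by rewrite cardfsU1 Hn add1n subnS Hd.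
have Hc' : #|` y |` S| <= b by rewrite cardfsU1 Hn add1n -subn_gt0 Hd.
have [S' [H1 H2 H3]] := IH (y |` S) HS' Hd' Hc' Hb.
exists S'; split=> //; exact: fsubset_trans (fsubsetU1 y S) H1.
Qed.

Local Open Scope fset_scope.

Definition bnd (a b : seq nat) (T : nat -> {fset nat}) : Prop :=
  forall i, i < size a ->
     (forall x, x \in T i -> x < nth 0 a i) /\ #|` T i| <= nth 0 b i.

Definition hab (a b : seq nat) := forall i, i < size a -> nth 0 b i <= nth 0 a i.

Definition tsum (p : nat) (T : nat -> {fset nat}) := \sum_(i < p) #|` T i|.

Lemma block_ext a b T : hab a b -> bnd a b T ->
  exists E, is_block a b E /\ contained_in (size a) T E.
Proof.
move=> Hab Hb.
have [E HE] : exists E : nat -> {fset nat}, forall i, i < size a ->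
   [/\ T i `<=` E i, (forall x, x \in E i -> x < nth 0 a i) & #|` E i| = nth 0 b i].
  have H : forall i, exists S, i < size a ->
   [/\ T i `<=` S, (forall x, x \in S -> x < nth 0 a i) & #|` S| = nth 0 b i].
    move=> i; case: (ltnP i (size a)) => Hi; last by exists fset0.
    have [H1 H2] := Hb i Hi.
    have [S' HS] := ext_set H1 H2 (Hab i Hi); by exists S'.
  have [f Hf] := choice H; by exists f.
exists E; split.
  by move=> i Hi; have [_ ? ?] := HE i Hi.
by move=> i Hi; have [? _ _] := HE i Hi.
Qed.

Lemma step_ext a b T : hab a b -> bnd a b T ->
  tsum (size a) T < \sum_(i < size a) nth 0 b i ->
  exists T', [/\ bnd a b T', forall i, T i `<=` T' i &
     tsum (size a) T' = (tsum (size a) T).+1].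
Proof.
move=> Hab Hb Hlt.
have [i0 Hi0] : exists i0 : 'I_(size a), #|` T i0| < nth 0 b i0.
  apply/not_existsP => H; move: Hlt; rewrite /tsum ltnNge => /negP; apply.
  apply: leq_sum => i _; rewrite leqNgt; apply/negP => Hc; exact: (H i).
have [Hx0 Hc0] := Hb i0 (ltn_ord i0).
have [y [Hy Hn]] := ex_new Hx0 (leq_trans Hi0 (Hab i0 (ltn_ord i0))).
exists (fun j : nat => if j == val i0 then y |` T i0 else T j); split.
- move=> i Hi; case: eqP => [->|_]; last exact: Hb.
  split; first by move=> x /fset1UP [->|/Hx0].
  by rewrite cardfsU1 Hn add1n.
- move=> i; case: eqP => [->|_]; [exact: fsubsetU1 | exact: fsubset_refl].
- rewrite /tsum (bigD1 i0) //= eqxx cardfsU1 Hn add1n [in RHS](bigD1 i0) //=.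
  congr (_ + _).+1; apply: eq_bigr => i /negbTE Hi.
  by rewrite -(inj_eq val_inj) in Hi; rewrite Hi.
Qed.

Lemma sum_ext a b T s : hab a b -> bnd a b T ->
  tsum (size a) T <= s -> s <= \sum_(i < size a) nth 0 b i ->
  exists T', [/\ bnd a b T', forall i, T i `<=` T' i & tsum (size a) T' = s].
Proof.
move=> Hab; move Hd: (s - tsum (size a) T) => d.
elim: d T Hd => [|d IH] T Hd HT H1 H2.
  exists T; split.
  - exact: HT.
  - by move=> i; exact: fsubset_refl.
  by apply/eqP; rewrite eqn_leq H1 -subn_eq0 Hd.
have Hlt : tsum (size a) T < s by rewrite -subn_gt0 Hd.
have [T1 [B1 S1 E1]] := step_ext Hab HT (leq_trans Hlt H2).
have Hd1 : s - tsum (size a) T1 = d by rewrite E1 subnS Hd.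
have Hl1 : tsum (size a) T1 <= s by rewrite E1.
have [T2 [B2 S2 E2]] := IH T1 Hd1 B1 Hl1 H2.
exists T2; split=> // i; exact: fsubset_trans (S1 i) (S2 i).
Qed.

Local Open Scope fset_scope.

Lemma nth_le_sumn (a : seq nat) i : nth 0 a i <= sumn a.
Proof.
elim: a i => [|x a IH] [|i] //=; first exact: leq_addr.
exact: leq_trans (IH i) (leq_addl _ _).
Qed.

Definition enc (p M : nat) (f : {ffun 'I_p -> {set 'I_M}}) : nat -> {fset nat} :=
  fun i => if (insub i : option 'I_p) is Some j then [fset val x | x in enum (f j)] else fset0.

Lemma enc_val p M f (j : 'I_p) : @enc p M f j = [fset val x | x in enum (f j)].
Proof. by rewrite /enc valK. Qed.

Definition dec (p M : nat) (E : nat -> {fset nat}) : {ffun 'I_p -> {set 'I_M}} :=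
  [ffun j : 'I_p => [set x : 'I_M | val x \in E j]].

Lemma enc_dec p M E i : i < p -> (forall x, x \in E i -> x < M) -> enc (dec p M E) i = E i.
Proof.
move=> Hi HE; have -> : i = val (Ordinal Hi) by [].
rewrite enc_val ffunE; apply/fsetP => y; apply/imfsetP/idP.
  by case=> x; rewrite mem_enum inE => Hx ->.
move=> Hy; exists (Ordinal (HE y Hy)) => //; by rewrite mem_enum inE.
Qed.

Lemma GC_exists a b s : hab a b -> exists F, is_GC a b s F.
Proof.
move=> Hab; set p := size a; set M := sumn a.
set L := [seq f <- enum {ffun 'I_p -> {set 'I_M}} | `[< is_block a b (@enc p M f) >]].
exists [seq @enc p M f | f <- L]; split.
  move=> j; rewrite size_map => Hj.
  rewrite (nth_map [ffun => set0]) //.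
  have := mem_nth [ffun => set0] Hj; rewrite mem_filter => /andP [/asboolP H _]; exact H.
move=> T [HT _].
have [E [HE HTE]] := block_ext Hab HT.
have HED : forall i, i < p -> enc (dec p M E) i = E i.
  move=> i Hi; apply: enc_dec => // x Hx; have [H _] := HE i Hi.
  exact: leq_trans (H x Hx) (nth_le_sumn a i).
have Hin : dec p M E \in L.
  rewrite mem_filter mem_enum andbT; apply/asboolP => i Hi; rewrite HED //; exact: HE.
exists (index (dec p M E) L); first by rewrite size_map index_mem.
rewrite (nth_map [ffun => set0]) ?index_mem // nth_index //.
by move=> i Hi; rewrite HED //; exact: HTE.
Qed.

Lemma C_le a b s F : 0 < s -> is_GC a b s F -> C a b s <= size F.
Proof.
move=> Hs HF; rewrite /C; case: eqP => [E|_]; first by rewrite E in Hs.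
case: pselect => [h|n]; last by exfalso; apply: n; exists (size F); apply/asboolP; exists F.
case: ex_minnP => m _ Hmin; apply: Hmin; apply/asboolP; by exists F.
Qed.

Lemma C_spec a b s : 0 < s -> hab a b -> exists F, size F = C a b s /\ is_GC a b s F.
Proof.
move=> Hs Hab; rewrite /C; case: eqP => [E|_]; first by rewrite E in Hs.
case: pselect => [h|n]; last first.
  by exfalso; have [F HF] := GC_exists s Hab; apply: n; exists (size F); apply/asboolP; exists F.
by case: ex_minnP => m /asboolP.
Qed.

Local Open Scope fset_scope.

Notation d0 := (fun _ : nat => (fset0 : {fset nat})).

Lemma sumn_nthE (b : seq nat) : sumn b = \sum_(i < size b) nth 0 b i.
Proof. by rewrite sumnE (big_nth 0) big_mkord. Qed.

Lemma bnd0 a b : bnd a b d0.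
Proof. by move=> i Hi; split=> //; rewrite cardfs0. Qed.

Lemma tsum0 p : tsum p d0 = 0.
Proof. by rewrite /tsum big1 // => i _; rewrite cardfs0. Qed.

Lemma adm_exists a b s : hab a b -> size b = size a -> s <= sumn b ->
  exists T, admissible a b s T.
Proof.
move=> Hab Hs Hle.
have H0 : tsum (size a) d0 <= s by rewrite tsum0.
have H1 : s <= \sum_(i < size a) nth 0 b i by rewrite -Hs -sumn_nthE.
have [T [HT _ HS]] := @sum_ext a b d0 s Hab (@bnd0 a b) H0 H1.
by exists T.
Qed.

Lemma GC_nonempty a b s F : hab a b -> size b = size a -> s <= sumn b ->
  is_GC a b s F -> 0 < size F.
Proof.
move=> Hab Hs Hle [_ HF]; have [T HT] := adm_exists Hab Hs Hle.
by have [j Hj _] := HF T HT; apply: leq_ltn_trans Hj.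
Qed.

Lemma small_cover a b t : hab a b -> size b = size a -> t.-1 <= sumn b ->
  exists F, [/\ size F = C a b t.-1,
   (forall j, j < size F -> is_block a b (nth d0 F j)) &
   (forall T, bnd a b T -> 0 < tsum (size a) T -> tsum (size a) T < t ->
      exists2 j, j < size F & contained_in (size a) T (nth d0 F j))].
Proof.
move=> Hab Hs Hle; case: (posnP t.-1) => Ht.
  exists [::]; split=> //; first by rewrite /C Ht.
  move=> T _ H1 H2; exfalso; move: H2; rewrite ltnNge; case/negP.
  by move: Ht H1; clear; case: t => [|[|t]] //= _ H; apply: leq_trans H.
have [F [HsF [HB HC]]] := C_spec Ht Hab.
exists F; split=> // T HT H1 H2.
have H3 : tsum (size a) T <= t.-1 by rewrite -ltnS (ltn_predK H2).
have H4 : t.-1 <= \sum_(i < size a) nth 0 b i by rewrite -Hs -sumn_nthE.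
have [T' [HT' Hsub HS']] := @sum_ext a b T t.-1 Hab HT H3 H4.
have [j Hj Hc] := HC T' (conj HT' HS').
exists j => // i Hi; exact: fsubset_trans (Hsub i) (Hc i Hi).
Qed.

Local Open Scope fset_scope.

Definition glue (m : nat) (X Y : nat -> {fset nat}) : nat -> {fset nat} :=
  fun i => if i < m then X i else Y (i - m).

Lemma glue_block v k w l X Y : size k = size v ->
  is_block v k X -> is_block w l Y -> is_block (v ++ w) (k ++ l) (glue (size v) X Y).
Proof.
move=> Hs HX HY i; rewrite size_cat /glue !nth_cat Hs => Hi.
case: ltnP => H; first exact: HX.
by apply: HY; rewrite ltn_subLR.
Qed.

Lemma tsum_split m n T : tsum (m + n)%N T = (tsum m T + tsum n (fun i => T (m + i)))%N.
Proof. by rewrite /tsum big_split_ord. Qed.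

Lemma nth_block a b F j : (forall j, j < size F -> is_block a b (nth d0 F j)) ->
  0 < size F -> is_block a b (nth (nth d0 F 0) F j).
Proof.
move=> HF H0; case: (ltnP j (size F)) => Hj.
  by rewrite (set_nth_default d0) //; apply: HF.
by rewrite nth_default //; apply: HF.
Qed.

Lemma tsum0_empty n T : tsum n T = 0 -> forall i, i < n -> T i = fset0.
Proof.
move=> H i Hi; apply: cardfs0_eq; move: H; rewrite /tsum (bigD1 (Ordinal Hi)) //=.
by move/eqP; rewrite addn_eq0 => /andP [/eqP].
Qed.

Local Close Scope fset_scope.

Lemma glue_contained m n T X Y :
  contained_in m T X -> contained_in n (fun i => T (m + i)) Y ->
  contained_in (m + n) T (glue m X Y).
Proof.
move=> HX HY i Hi; rewrite /glue; case: ltnP => Hm; first exact: HX.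
by have := HY (i - m); rewrite subnKC //; apply; rewrite ltn_subLR.
Qed.

Lemma empty_contained n T Y : (forall i, i < n -> T i = fset0) -> contained_in n T Y.
Proof. by move=> H i Hi; rewrite H // fsub0set. Qed.

Theorem theorem6p3 (v k w l : seq nat) (t : nat) :
  size k = size v ->
  all (fun x => 0 < x) v -> all (fun x => 0 < x) k ->
  (forall i, i < size v -> nth 0 k i <= nth 0 v i) ->
  size l = size w ->
  all (fun x => 0 < x) w -> all (fun x => 0 < x) l ->
  (forall i, i < size w -> nth 0 l i <= nth 0 w i) ->
  0 < t -> t <= sumn k -> t <= sumn l ->
  C (v ++ w) (k ++ l) t <=
    maxn (C v k t) (C w l t) + C v k t.-1 * C w l t.-1.
Proof.
move=> Hk _ _ Hkv Hl _ _ Hlw Ht Htk Htl.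
have [A' [HA's HA'b HA'c]] := small_cover Hkv Hk (leq_trans (leq_pred t) Htk).
have [B' [HB's HB'b HB'c]] := small_cover Hlw Hl (leq_trans (leq_pred t) Htl).
have [A [HAs [HAb HAc]]] := C_spec Ht Hkv.
have [B [HBs [HBb HBc]]] := C_spec Ht Hlw.
have HA0 := GC_nonempty Hkv Hk Htk (conj HAb HAc).
have HB0 := GC_nonempty Hlw Hl Htl (conj HBb HBc).
rewrite -HA's -HB's -HAs -HBs.
set m := size v; set n := size w.
set dA := nth d0 A 0; set dB := nth d0 B 0.
set na := size A'; set nb := size B'.
set N1 := maxn (size A) (size B).
set F1 := [seq glue m (nth dA A q) (nth dB B q) | q <- iota 0 N1].
set F2 := [seq glue m (nth d0 A' (q %/ nb)) (nth d0 B' (q %% nb)) | q <- iota 0 (na * nb)].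
have HF : is_GC (v ++ w) (k ++ l) t (F1 ++ F2); last first.
  by have := C_le Ht HF; rewrite size_cat !size_map !size_iota.
have nthF1 : forall q, q < N1 -> nth d0 (F1 ++ F2) q = glue m (nth dA A q) (nth dB B q).
  move=> q Hq; rewrite nth_cat size_map size_iota Hq (nth_map 0) ?size_iota //.
  by rewrite nth_iota.
have nthF2 : forall q, q < na * nb -> nth d0 (F1 ++ F2) (N1 + q) =
    glue m (nth d0 A' (q %/ nb)) (nth d0 B' (q %% nb)).
  move=> q Hq; rewrite nth_cat size_map size_iota ltnNge leq_addr /= addKn.
  by rewrite (nth_map 0) ?size_iota // nth_iota.
split.
  move=> j; rewrite size_cat !size_map !size_iota => Hj.
  case: (ltnP j N1) => Hj1.
    rewrite nthF1 //; apply: glue_block => //; exact: nth_block.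
  have Hq : j - N1 < na * nb by rewrite ltn_subLR.
  rewrite -(subnKC Hj1) nthF2 //.
  have Hnb : 0 < nb by move: Hq; case: (nb) => //; rewrite muln0.
  apply: glue_block => //; [apply: HA'b; rewrite ltn_divLR // | apply: HB'b; rewrite ltn_pmod //].
move=> T [HT HS].
have HS' : (tsum m T + tsum n (fun i => T (m + i)) = t)%N.
  by rewrite -tsum_split -HS /tsum size_cat.
have HTv : bnd v k T.
  move=> i Hi; have := HT i; rewrite size_cat !nth_cat Hk Hi; apply.
  exact: leq_trans Hi (leq_addr _ _).
have HTw : bnd w l (fun i => T (m + i)).
  move=> i Hi; have := HT (m + i); rewrite size_cat !nth_cat Hk (ltnNge (m + i) m) leq_addr /= addKn.
  by apply; rewrite ltn_add2l.
rewrite [size (v ++ w)]size_cat.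
case: (posnP (tsum m T)) => H0.
  have Hw : tsum n (fun i => T (m + i)) = t by rewrite -HS' H0.
  have [j Hj Hc] := HBc _ (conj HTw Hw).
  have Hj1 : j < N1 by rewrite leq_max Hj orbT.
  exists j; first by rewrite size_cat size_map size_iota; exact: leq_trans Hj1 (leq_addr _ _).
  rewrite nthF1 //; apply: glue_contained.
    apply: empty_contained; exact: tsum0_empty.
  by rewrite /dB (set_nth_default d0).
case: (posnP (tsum n (fun i => T (m + i)))) => H1.
  have Hv : tsum m T = t by rewrite -HS' H1 addn0.
  have [j Hj Hc] := HAc _ (conj HTv Hv).
  have Hj1 : j < N1 by rewrite leq_max Hj.
  exists j; first by rewrite size_cat size_map size_iota; exact: leq_trans Hj1 (leq_addr _ _).
  rewrite nthF1 //; apply: glue_contained.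
    by rewrite /dA (set_nth_default d0).
  apply: empty_contained; exact: tsum0_empty.
have L1 : tsum m T < t by rewrite -HS' -addn1 leq_add2l.
have L2 : tsum n (fun i => T (m + i)) < t by rewrite -HS' -add1n leq_add2r.
have [i1 Hi1 Hc1] := HA'c T HTv H0 L1.
have [i2 Hi2 Hc2] := HB'c _ HTw H1 L2.
have Hnb : 0 < nb by apply: leq_ltn_trans Hi2.
have Hq : i1 * nb + i2 < na * nb.
  have : i1.+1 * nb <= na * nb by rewrite leq_mul2r Hi1 orbT.
  rewrite mulSn; lia.
exists (N1 + (i1 * nb + i2)).
  by rewrite size_cat !size_map !size_iota ltn_add2l.
rewrite nthF2 // divnMDl // divn_small // addn0 modnMDl modn_small //.
exact: glue_contained.
Qed.
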